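(* Let $A \in \mathbb{C}^{m\times n}$, $B \in \mathbb{C}^{p\times q}$, $C \in \mathbb{C}^{m\times q}$. Then there always exists $\widehat{X} \in \mathbb{C}^{n\times p}$ such that $A^{*}(C - AXB)(C - AXB)^{*}A \succcurlyeq A^{*}(C - A\widehat{X}B)(C - A\widehat{X}B)^{*}A$ for all $X \in \mathbb{C}^{n\times p}$, and there always exists $\widehat{X} \in \mathbb{C}^{n\times p}$ such that $B(C - AXB)^{*}(C - AXB)B^{*} \succcurlyeq B(C - A\widehat{X}B)^{*}(C - A\widehat{X}B)B^{*}$ for all $X \in \mathbb{C}^{n\times p}$. Moreover, the set of such minimizers $\widehat{X}$ for the first problem, the set of such minimizers for the second problem, and the set of minimizers of $X \mapsto \mathrm{tr}[(C - AXB)(C - AXB)^{*}]$ over $\mathbb{C}^{n\times p}$ all coincide and equal $\{A^{\dagger}CB^{\dagger} + F_AV_1 + V_2E_B : V_1, V_2 \in \mathbb{C}^{n\times p}\}$.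
   Context: $\succcurlyeq$ is the Löwner order ($P \succcurlyeq Q$ iff $P - Q$ is positive semidefinite); $U^{\dagger}$ is the Moore–Penrose inverse; $E_U = I - UU^{\dagger}$, $F_U = I - U^{\dagger}U$; $\mathrm{tr}$ is the trace. *)

(* Defs.v *)
(* complex matrices are matrices over R[i] with R : realType
   (R[i] = `complex R` from mathcomp-real-closed, a numClosedFieldType). *)
From mathcomp Require Import all_boot all_algebra spectral.
From mathcomp Require Import reals complex classical_sets.
Set Implicit Arguments.
Unset Strict Implicit.
Unset Printing Implicit Defensive.
Import GRing.Theory Num.Theory.
Local Open Scope ring_scope.
Local Open Scope sesquilinear_scope.

Section Defs.
Variable C : numClosedFieldType.

(* conjugate transpose: M ^t* = (map_mx conjC M)^T  (spectral.v) *)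

Definition psdmx n (P : 'M[C]_n) : Prop :=
  forall x : 'cV[C]_n, 0 <= (x ^t* *m P *m x) 0 0.

Definition loewner_ge n (P Q : 'M[C]_n) : Prop := psdmx (P - Q).

Definition is_mpinv m n (A : 'M[C]_(m, n)) (X : 'M[C]_(n, m)) : Prop :=
  [/\ A *m X *m A = A, X *m A *m X = X,
      (A *m X) ^t* = A *m X & (X *m A) ^t* = X *m A].

Definition mpinv m n (A : 'M[C]_(m, n)) : 'M[C]_(n, m) :=
  xget 0 [set X | is_mpinv A X].

Definition Emx m n (U : 'M[C]_(m, n)) : 'M[C]_m := 1%:M - U *m mpinv U.
Definition Fmx m n (U : 'M[C]_(m, n)) : 'M[C]_n := 1%:M - mpinv U *m U.
End Defs.

(* Main.v *)
Require Import Defs.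
From mathcomp Require Import all_boot all_algebra spectral.
From mathcomp Require Import reals complex classical_sets.
Set Implicit Arguments.
Unset Strict Implicit.
Unset Printing Implicit Defensive.
Import GRing.Theory Num.Theory.
From mathcomp Require Import order.
Import Order.TTheory.
Local Open Scope ring_scope.
Local Open Scope sesquilinear_scope.
Section S.
Variable C : numClosedFieldType.
Lemma ctM m n p (A : 'M[C]_(m,n)) (B : 'M[C]_(n,p)) : (A *m B)^t* = B^t* *m A^t*.
Proof. by rewrite trmx_mul map_mxM. Qed.
Lemma ctD m n (A B : 'M[C]_(m,n)) : (A + B)^t* = A^t* + B^t*.
Proof. by rewrite linearD /= map_mxD. Qed.
Lemma ctN m n (A : 'M[C]_(m,n)) : (- A)^t* = - A^t*.
Proof. by rewrite linearN /= map_mxN. Qed.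
Lemma ct1 n : (1%:M : 'M[C]_n)^t* = 1%:M.
Proof. by rewrite trmx1 map_mx1. Qed.
Lemma ct0 m n : (0 : 'M[C]_(m,n))^t* = 0.
Proof. by rewrite trmx0 map_mx0. Qed.
Lemma rank_ct m n (A : 'M[C]_(m,n)) : (\rank (A^t*) = \rank A)%N.
Proof. by rewrite mxrank_map mxrank_tr. Qed.
Lemma trE m n (M : 'M[C]_(m,n)) : \tr (M *m M^t*) = \sum_i \sum_j M i j * (M i j)^*.
Proof. by apply: eq_bigr => i _; rewrite !mxE; apply: eq_bigr => j _; rewrite !mxE. Qed.
Lemma tr_ge0 m n (M : 'M[C]_(m,n)) : 0 <= \tr (M *m M^t*).
Proof. by rewrite trE sumr_ge0 // => i _; rewrite sumr_ge0 // => j _; rewrite mul_conjC_ge0. Qed.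
Lemma tr_eq0 m n (M : 'M[C]_(m,n)) : \tr (M *m M^t*) = 0 -> M = 0.
Proof.
rewrite trE => /eqP; rewrite psumr_eq0 => [/allP H|i _]; last first.
  by rewrite sumr_ge0 // => j _; rewrite mul_conjC_ge0.
apply/matrixP => i j; rewrite mxE; have /implyP := H i (mem_index_enum _).
move/(_ isT); rewrite psumr_eq0 => [/allP H2|k _]; last by rewrite mul_conjC_ge0.
by have /implyP := H2 j (mem_index_enum _); move/(_ isT); rewrite mul_conjC_eq0 => /eqP.
Qed.
Lemma ctK m n (A : 'M[C]_(m,n)) : A^t* ^t* = A. Proof. exact: trmxCK. Qed.
Lemma rowv_eq0 n (u : 'rV[C]_n) : u *m u^t* = 0 -> u = 0.
Proof. by move=> H; apply: tr_eq0; rewrite H mxtrace0. Qed.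
Lemma gram_unit r n (G : 'M[C]_(r,n)) : row_free G -> G *m G^t* \in unitmx.
Proof.
move=> fG; rewrite -row_free_unit; apply: inj_row_free => v H.
have : (v *m G) *m (v *m G)^t* = 0 by rewrite ctM !mulmxA -(mulmxA v) H mul0mx.
move/rowv_eq0 => /eqP; rewrite mulmx_free_eq0 //; exact/eqP.
Qed.
Lemma herm_inv r (K : 'M[C]_r) : K^t* = K -> K \in unitmx -> (invmx K)^t* = invmx K.
Proof.
move=> hK uK.
have H : (invmx K)^t* *m K = 1%:M by rewrite -{2}hK -ctM mulmxV // ct1.
by rewrite -[LHS]mulmx1 -(mulmxV uK) mulmxA H mul1mx.
Qed.
Lemma mp_fact m n r (F : 'M[C]_(m, r)) (G : 'M[C]_(r, n)) :
  row_free G -> row_free (F^t*) -> exists X, is_mpinv (F *m G) X.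
Proof.
move=> fG fF.
have uG := gram_unit fG.
have uF : (F^t*) *m F \in unitmx by have := gram_unit fF; rewrite ctK.
set KG := invmx (G *m G^t*); set KF := invmx (F^t* *m F).
have hKG : KG^t* = KG by apply: herm_inv => //; rewrite ctM ctK.
have hKF : KF^t* = KF by apply: herm_inv => //; rewrite ctM ctK.
exists (G^t* *m KG *m KF *m F^t*).
have AX : F *m G *m (G^t* *m KG *m KF *m F^t*) = F *m KF *m F^t*.
  by rewrite -!mulmxA (mulmxA G) (mulmxA (G *m G^t*)) (mulmxV uG) mul1mx.
have XA : (G^t* *m KG *m KF *m F^t*) *m (F *m G) = G^t* *m KG *m G.
  by rewrite -!mulmxA (mulmxA (F^t*) F) (mulmxA KF) (mulVmx uF) mul1mx.
split.
- by rewrite AX -!mulmxA (mulmxA (F^t*) F) (mulmxA KF) (mulVmx uF) mul1mx.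
- by rewrite XA -!mulmxA (mulmxA G) (mulmxA (G *m G^t*)) (mulmxV uG) mul1mx.
- by rewrite AX !ctM ctK hKF !mulmxA.
- by rewrite XA !ctM ctK hKG !mulmxA.
Qed.
Lemma mp_exists m n (A : 'M[C]_(m, n)) : exists X, is_mpinv A X.
Proof.
rewrite -(mulmx_base A); apply: mp_fact; first exact: row_base_free.
by rewrite /row_free rank_ct; exact: col_base_full.
Qed.
Lemma mpinvP m n (A : 'M[C]_(m, n)) : is_mpinv A (mpinv A).
Proof.
rewrite /mpinv; have [X HX] := mp_exists A.
by have := @xgetPex _ 0 [set X | is_mpinv A X] (ex_intro _ X HX).
Qed.
Lemma psd_gram k l (Y : 'M[C]_(k, l)) : psdmx (Y^t* *m Y).
Proof.
move=> x; rewrite -trace_mx11.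
have -> : x^t* *m (Y^t* *m Y) *m x = (Y *m x)^t* *m (Y *m x)^t*^t*.
  by rewrite ctK ctM !mulmxA.
by have := tr_ge0 ((Y *m x)^t*).
Qed.
Lemma psd_neg_gram k l (Y : 'M[C]_(k, l)) : psdmx (- (Y^t* *m Y)) -> Y = 0.
Proof.
move=> H; apply/matrixP => i j; rewrite mxE.
pose d : 'cV[C]_l := delta_mx j 0.
have := H (d); rewrite -trace_mx11.
have -> : (d)^t* *m - (Y^t* *m Y) *m d =
   - ((Y *m d)^t* *m (Y *m d)^t*^t*).
  by rewrite ctK ctM mulmxN mulNmx !mulmxA.
rewrite raddfN oppr_ge0 => H2.
have /tr_eq0 : \tr ((Y *m d)^t* *m (Y *m d)^t*^t*) = 0.
  by apply/le_anti; rewrite H2 tr_ge0.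
move/(congr1 (fun M => M^t*)); rewrite ctK ct0 /d -colE => /matrixP/(_ i 0).
by rewrite !mxE.
Qed.
Lemma gen1 k l r (A : 'M[C]_(k, l)) (N M : 'M[C]_(k, r)) :
  A^t* *m N *m M^t* = 0 ->
  A^t* *m (N + M) *m (N + M)^t* *m A =
  A^t* *m N *m N^t* *m A + (M^t* *m A)^t* *m (M^t* *m A).
Proof.
move=> H.
have c2 : A^t* *m M *m N^t* *m A = 0.
  have := congr1 (fun Z => (Z *m A)^t*) H.
  by rewrite /= mul0mx ct0 !ctM !ctK !mulmxA.
rewrite ctD (mulmxDr (A^t*)) !mulmxDl !mulmxDr !mulmxDl H mul0mx c2 addr0 add0r.
by rewrite ctM ctK !mulmxA.
Qed.
Lemma gen2 k l r (B : 'M[C]_(l, k)) (N M : 'M[C]_(r, k)) :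
  B *m N^t* *m M = 0 ->
  B *m (N + M)^t* *m (N + M) *m B^t* =
  B *m N^t* *m N *m B^t* + (M *m B^t*)^t* *m (M *m B^t*).
Proof.
move=> H; have := @gen1 _ _ _ (B^t*) (N^t*) (M^t*).
by rewrite !ctK -ctD ctK => ->.
Qed.
Lemma gen3 k l (N M : 'M[C]_(k, l)) :
  \tr (N *m M^t*) = 0 -> \tr (M *m N^t*) = 0 ->
  \tr ((N + M) *m (N + M)^t*) = \tr (N *m N^t*) + \tr (M *m M^t*).
Proof.
move=> h1 h2; rewrite ctD mulmxDr !mulmxDl !mxtraceD h1 h2 addr0 add0r //.
Qed.
Section Main.
Variables (m n p q : nat) (A : 'M[C]_(m, n)) (B : 'M[C]_(p, q)) (D : 'M[C]_(m, q)).
Variables (Ap : 'M[C]_(n, m)) (Bp : 'M[C]_(q, p)).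
Hypotheses (hA : is_mpinv A Ap) (hB : is_mpinv B Bp).
Variables (P : 'M[C]_m) (Q : 'M[C]_q).
Hypotheses (eP : A *m Ap = P) (eQ : Bp *m B = Q).
Lemma PA : P *m A = A. Proof. by case: hA; rewrite eP. Qed.
Lemma BQ : B *m Q = B. Proof. by case: hB => h _ _ _; rewrite -eQ mulmxA. Qed.
Lemma Ph : P^t* = P. Proof. by case: hA; rewrite eP. Qed.
Lemma Qh : Q^t* = Q. Proof. by case: hB; rewrite eQ. Qed.
Lemma PP : P *m P = P. Proof. by rewrite -{2}eP mulmxA PA eP. Qed.
Lemma QQ : Q *m Q = Q. Proof. by rewrite -{1}eQ -mulmxA BQ eQ. Qed.
Lemma AtP : A^t* *m P = A^t*. Proof. by rewrite -Ph -ctM PA. Qed.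
Lemma QBt : Q *m B^t* = B^t*. Proof. by rewrite -Qh -ctM BQ. Qed.
Definition Mx (X : 'M[C]_(n, p)) := P *m D *m Q - A *m X *m B.
Definition Nm := D - P *m D *m Q.
Lemma decomp X : D - A *m X *m B = Nm + Mx X.
Proof. by rewrite /Nm /Mx addrA subrK. Qed.
Lemma PM X : P *m Mx X = Mx X.
Proof. by rewrite /Mx mulmxBr !mulmxA PP PA. Qed.
Lemma MQ X : Mx X *m Q = Mx X.
Proof. by rewrite /Mx mulmxBl -!mulmxA QQ BQ. Qed.
Lemma PNQ : P *m Nm *m Q = 0.
Proof. by rewrite /Nm mulmxBr mulmxBl !mulmxA PP -!mulmxA QQ subrr. Qed.
Lemma QMt X : Q *m (Mx X)^t* = (Mx X)^t*.
Proof. by rewrite -Qh -ctM MQ. Qed.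
Lemma cross1 X : A^t* *m Nm *m (Mx X)^t* = 0.
Proof.
rewrite /Nm mulmxBr !mulmxA AtP mulmxBl -(mulmxA _ Q) QMt subrr //.
Qed.
Lemma cross2 X : B *m Nm^t* *m Mx X = 0.
Proof.
rewrite /Nm ctD ctN !ctM Qh Ph (mulmxBr B) (mulmxA B) BQ mulmxBl !mulmxA.
by rewrite -(mulmxA _ P) PM subrr.
Qed.
Lemma eMx X : P *m Mx X *m Q = Mx X.
Proof. by rewrite PM MQ. Qed.
Lemma tr1 X : \tr (Nm *m (Mx X)^t*) = 0.
Proof.
rewrite -eMx !ctM Qh Ph !mulmxA mxtrace_mulC !mulmxA PNQ !mul0mx mxtrace0 //.
Qed.
Lemma tr2 X : \tr (Mx X *m Nm^t*) = 0.
Proof.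
have e : Q *m Nm^t* *m P = 0.
  by rewrite -{1}Qh -{1}Ph -ctM -ctM mulmxA PNQ ct0.
rewrite -eMx -!mulmxA mxtrace_mulC -!mulmxA (mulmxA Q) e !mulmx0 mxtrace0 //.
Qed.
Lemma MX0 : Mx (Ap *m D *m Bp) = 0.
Proof. by rewrite /Mx !mulmxA eP -(mulmxA _ Bp) eQ subrr. Qed.
Lemma Y1_eq0 X : (Mx X)^t* *m A = 0 -> Mx X = 0.
Proof.
move=> H; rewrite -PM -Ph -eP ctM -mulmxA.
have -> : A^t* *m Mx X = ((Mx X)^t* *m A)^t* by rewrite ctM ctK.
by rewrite H ct0 mulmx0.
Qed.
Lemma Y2_eq0 X : Mx X *m B^t* = 0 -> Mx X = 0.
Proof. by move=> H; rewrite -MQ -Qh -eQ ctM mulmxA H mul0mx. Qed.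
Lemma AF : A *m (1%:M - Ap *m A) = 0.
Proof. by rewrite mulmxBr mulmx1 mulmxA; case: hA => -> _ _ _; rewrite subrr. Qed.
Lemma EB : (1%:M - B *m Bp) *m B = 0.
Proof. by rewrite mulmxBl mul1mx; case: hB => -> _ _ _; rewrite subrr. Qed.
Lemma setP Xh : Mx Xh = 0 <-> exists V1 V2 : 'M[C]_(n, p),
  Xh = Ap *m D *m Bp + (1%:M - Ap *m A) *m V1 + V2 *m (1%:M - B *m Bp).
Proof.
split; last first.
  case=> V1 [V2 ->]; have := AF; have := EB.
  set F := 1%:M - Ap *m A; set E := 1%:M - B *m Bp => hE hF.
  clearbody F E; rewrite /Mx !mulmxDr !mulmxDl !mulmxA hF !mul0mx addr0.
  rewrite -(mulmxA _ E) hE mulmx0 addr0 eP -(mulmxA _ Bp) eQ.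
  by rewrite subrr.
move=> H; exists Xh, (Ap *m A *m Xh).
have hAXB : A *m Xh *m B = P *m D *m Q by apply/eqP; rewrite eq_sym -subr_eq0; apply/eqP; exact: H.
have key : Ap *m A *m Xh *m (B *m Bp) = Ap *m D *m Bp.
  have -> : Ap *m A *m Xh *m (B *m Bp) = Ap *m (A *m Xh *m B) *m Bp by rewrite !mulmxA.
  rewrite hAXB -eP -eQ !mulmxA; case: hA => _ -> _ _.
  by rewrite -!mulmxA (mulmxA Bp); case: hB => _ -> _ _.
rewrite mulmxBl mul1mx mulmxBr mulmx1 key.
by rewrite addrAC (addrC (Ap *m D *m Bp)) subrK addrC subrK.
Qed.
Lemma thm1 Xh :
  (forall X : 'M[C]_(n, p), loewner_ge
     (A ^t* *m (D - A *m X *m B) *m (D - A *m X *m B) ^t* *m A)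
     (A ^t* *m (D - A *m Xh *m B) *m (D - A *m Xh *m B) ^t* *m A))
  <-> Mx Xh = 0.
Proof.
rewrite /loewner_ge; split.
  move=> /(_ (Ap *m D *m Bp)); rewrite !decomp !(gen1 (cross1 _)) MX0 ct0 mul0mx.
  rewrite mulmx0 opprD addrACA subrr add0r sub0r => /psd_neg_gram; exact: Y1_eq0.
move=> H X; rewrite !decomp !(gen1 (cross1 _)) H ct0 mul0mx mulmx0.
by rewrite opprD addrACA subrr add0r oppr0 addr0; exact: psd_gram.
Qed.
Lemma thm2 Xh :
  (forall X : 'M[C]_(n, p), loewner_ge
     (B *m (D - A *m X *m B) ^t* *m (D - A *m X *m B) *m B ^t*)
     (B *m (D - A *m Xh *m B) ^t* *m (D - A *m Xh *m B) *m B ^t*))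
  <-> Mx Xh = 0.
Proof.
rewrite /loewner_ge; split.
  move=> /(_ (Ap *m D *m Bp)); rewrite !decomp !(gen2 (cross2 _)) MX0 mul0mx ct0.
  rewrite mul0mx opprD addrACA subrr add0r sub0r => /psd_neg_gram; exact: Y2_eq0.
move=> H X; rewrite !decomp !(gen2 (cross2 _)) H mul0mx ct0 mul0mx.
by rewrite opprD addrACA subrr add0r oppr0 addr0; exact: psd_gram.
Qed.
Lemma thm3 Xh :
  (forall X : 'M[C]_(n, p),
     \tr ((D - A *m Xh *m B) *m (D - A *m Xh *m B) ^t*)
     <= \tr ((D - A *m X *m B) *m (D - A *m X *m B) ^t*))
  <-> Mx Xh = 0.
Proof.
split.
  move=> /(_ (Ap *m D *m Bp)); rewrite !decomp !(gen3 (tr1 _) (tr2 _)) MX0 ct0 mulmx0.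
  rewrite mxtrace0 addr0 gerDl => h; apply: tr_eq0; apply/le_anti.
  by rewrite h tr_ge0.
move=> H X; rewrite !decomp !(gen3 (tr1 _) (tr2 _)) H ct0 mulmx0 mxtrace0 addr0.
by rewrite lerDl tr_ge0.
Qed.
End Main.
End S.

Local Open Scope complex_scope.

Theorem theorem7p4 (R : realType) (m n p q : nat)
  (A : 'M[R[i]]_(m, n)) (B : 'M[R[i]]_(p, q)) (C : 'M[R[i]]_(m, q)) :
  (exists Xh : 'M[R[i]]_(n, p), forall X : 'M[R[i]]_(n, p),
     loewner_ge
       (A ^t* *m (C - A *m X *m B) *m (C - A *m X *m B) ^t* *m A)
       (A ^t* *m (C - A *m Xh *m B) *m (C - A *m Xh *m B) ^t* *m A)) /\
  (exists Xh : 'M[R[i]]_(n, p), forall X : 'M[R[i]]_(n, p),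
     loewner_ge
       (B *m (C - A *m X *m B) ^t* *m (C - A *m X *m B) *m B ^t*)
       (B *m (C - A *m Xh *m B) ^t* *m (C - A *m Xh *m B) *m B ^t*)) /\
  (forall Xh : 'M[R[i]]_(n, p),
     ((forall X : 'M[R[i]]_(n, p),
        loewner_ge
          (A ^t* *m (C - A *m X *m B) *m (C - A *m X *m B) ^t* *m A)
          (A ^t* *m (C - A *m Xh *m B) *m (C - A *m Xh *m B) ^t* *m A))
      <-> (exists V1 V2 : 'M[R[i]]_(n, p),
             Xh = mpinv A *m C *m mpinv B + Fmx A *m V1 + V2 *m Emx B)) /\
     ((forall X : 'M[R[i]]_(n, p),
        loewner_ge
          (B *m (C - A *m X *m B) ^t* *m (C - A *m X *m B) *m B ^t*)
          (B *m (C - A *m Xh *m B) ^t* *m (C - A *m Xh *m B) *m B ^t*))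
      <-> (exists V1 V2 : 'M[R[i]]_(n, p),
             Xh = mpinv A *m C *m mpinv B + Fmx A *m V1 + V2 *m Emx B)) /\
     ((forall X : 'M[R[i]]_(n, p),
        \tr ((C - A *m Xh *m B) *m (C - A *m Xh *m B) ^t*)
        <= \tr ((C - A *m X *m B) *m (C - A *m X *m B) ^t*))
      <-> (exists V1 V2 : 'M[R[i]]_(n, p),
             Xh = mpinv A *m C *m mpinv B + Fmx A *m V1 + V2 *m Emx B))).

Proof.
have hA := mpinvP A; have hB := mpinvP B.
split; [|split].
- exists (mpinv A *m C *m mpinv B).
  by apply/(thm1 C hA hB erefl erefl); exact: MX0.
- exists (mpinv A *m C *m mpinv B).
  by apply/(thm2 C hA hB erefl erefl); exact: MX0.
move=> Xh; rewrite /Fmx /Emx; split; [|split].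
- exact: iff_trans (thm1 C hA hB erefl erefl Xh) (setP C hA hB erefl erefl Xh).
- exact: iff_trans (thm2 C hA hB erefl erefl Xh) (setP C hA hB erefl erefl Xh).
- exact: iff_trans (thm3 C hA hB erefl erefl Xh) (setP C hA hB erefl erefl Xh).
Qed.
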